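(* Let $L$ be a $\mathbb{Z}$-lattice, $A,s$ positive integers and $w\in R(A,L)$. Define $\mathfrak{S}_{w,s}(L)=\{(\alpha,\beta)\in(\mathbb{Z}/s\mathbb{Z})^2: L\prec_{A,(\alpha,\beta),s}w\}$, for every $K\in\mathrm{gen}(L)$ with $K\not\cong L$ define $\mathfrak{S}_{L,s}(K)=\{(\alpha,\beta)\in(\mathbb{Z}/s\mathbb{Z})^2: K\prec_{A,(\alpha,\beta),s}L\}$, and let $\mathfrak{S}_s=\mathfrak{S}_{w,s}(L)\cap\bigcap_{K}\mathfrak{S}_{L,s}(K)$, the intersection over all $K\in\mathrm{gen}(L)$ not isometric to $L$. Let $(\alpha,\beta)\in\mathfrak{S}_s$ and let $\ell=\mathbb{Z}v_1+\mathbb{Z}v_2=[A,b,a]$ with $(a,b)\equiv(\alpha,\beta)\pmod s$ and $Aa-b^2>0$. If $\ell$ is represented by some lattice in $\mathrm{gen}(L)$, then there exists a representation $\sigma:\ell\to L$ with $\sigma(v_1)=w$.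
   Context: All $\mathbb{Z}$-lattices are free $\mathbb{Z}$-modules of finite rank with a positive definite, integral symmetric bilinear form $B$; $Q(v)=B(v,v)$. A representation is a $B$-preserving linear map; $\cong$ means isometric. $[A,b,a]$ is the binary lattice $\mathbb{Z}v_1+\mathbb{Z}v_2$ with $Q(v_1)=A$, $B(v_1,v_2)=b$, $Q(v_2)=a$. $\mathrm{gen}(L)$ is the set of lattices on $V=\mathbb{Q}L$ locally isometric to $L$ at every prime. $R(A,K)=\{v\in K:Q(v)=A\}$. For lattices $K,L$ on $V$, $v\in R(A,K)$: $R_v(K,\alpha,\beta,s)=\{u\in K/sK:Q(u)\equiv\alpha,\ B(u,v)\equiv\beta\pmod s\}$; $R_v(K,L,s)=\{\tau\in O(V):\tau(sK)\subseteq L,\ \tau(v)\in L\}$; $K\prec_{A,(\alpha,\beta),s}L$ means: for every $v\in R(A,K)$ and every coset $u\in R_v(K,\alpha,\beta,s)$ there is $\tau\in R_v(K,L,s)$ with $\tau(\tilde u)\in L$ for all $\tilde u\in u$. For $v,w\in R(A,L)$: $R_{v,w}(L,s)=\{\tau\in R_v(L,L,s):\tau(v)=w\}$; $L\prec_{A,(\alpha,\beta),s}w$ means: for every $v\in R(A,L)$ and every coset $u\in R_v(L,\alpha,\beta,s)$ there is $\tau\in R_{v,w}(L,s)$ with $\tau(\tilde u)\in L$ for all $\tilde u\in u$. *)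

(* Defs.v *)
(* The quadratic space V = Q L is modelled as 'rV[rat]_n with
   the bilinear form B(u,v) = u G v^T (G symmetric, positive definite).
   A lattice on V is given by a basis matrix M (rows = Z-basis), M invertible.
   Isometries act on row vectors on the right: tau(v) = v *m tau. *)
From mathcomp Require Import all_boot all_order all_algebra.
Set Implicit Arguments. Unset Strict Implicit. Unset Printing Implicit Defensive.
Import Order.TTheory GRing.Theory Num.Theory.
Local Open Scope ring_scope.

Definition bil (n : nat) (G : 'M[rat]_n) (u v : 'rV[rat]_n) : rat :=
  (u *m G *m v^T) 0 0.

Definition posdef (n : nat) (G : 'M[rat]_n) : Prop :=
  forall v : 'rV[rat]_n, v != 0 -> 0 < bil G v v.

Definition inLat (n : nat) (M : 'M[rat]_n) (v : 'rV[rat]_n) : Prop :=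
  exists x : 'rV[int]_n, v = map_mx (fun z : int => z%:~R) x *m M.

Definition is_lattice (n : nat) (G M : 'M[rat]_n) : Prop :=
  M \in unitmx /\
  (forall u v, inLat M u -> inLat M v -> exists z : int, bil G u v = z%:~R).

Definition orth (n : nat) (G t : 'M[rat]_n) : Prop :=
  t \in unitmx /\ t *m G *m t^T = G.

Definition congr (s alpha : int) (x : rat) : Prop :=
  exists k : int, x = (alpha + s * k)%:~R.

Definition Rset (n : nat) (G M : 'M[rat]_n) (A : int) (v : 'rV[rat]_n) : Prop :=
  inLat M v /\ bil G v v = A%:~R.

(* K <_{A,(alpha,beta),s} L.  A coset u of K/sK in R_v(K,alpha,beta,s) is given
   by any representative u0 in K; its elements are u0 + s k, k in K. *)
Definition prec_lat (n : nat) (G MK ML : 'M[rat]_n) (A alpha beta s : int) : Prop :=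
  forall v, Rset G MK A v ->
  forall u, inLat MK u -> congr s alpha (bil G u u) -> congr s beta (bil G u v) ->
  exists t, [/\ orth G t,
     (forall y, inLat MK y -> inLat ML ((s%:~R *: y) *m t)),
     inLat ML (v *m t) &
     (forall k, inLat MK k -> inLat ML ((u + s%:~R *: k) *m t))].

Definition prec_w (n : nat) (G ML : 'M[rat]_n) (A alpha beta s : int)
    (w : 'rV[rat]_n) : Prop :=
  forall v, Rset G ML A v ->
  forall u, inLat ML u -> congr s alpha (bil G u u) -> congr s beta (bil G u v) ->
  exists t, [/\ orth G t,
     (forall y, inLat ML y -> inLat ML ((s%:~R *: y) *m t)),
     inLat ML (v *m t), v *m t = w &
     (forall k, inLat ML k -> inLat ML ((u + s%:~R *: k) *m t))].

Definition loc (n : nat) (p : nat) (M : 'M[rat]_n) (v : 'rV[rat]_n) : Prop :=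
  exists d : nat, ~~ (p %| d)%N /\ inLat M (d%:R *: v).

Definition in_gen (n : nat) (G ML MK : 'M[rat]_n) : Prop :=
  is_lattice G MK /\
  forall p : nat, prime p ->
    exists t, orth G t /\ forall v, loc p ML v <-> loc p MK (v *m t).

Definition iso (n : nat) (G MK ML : 'M[rat]_n) : Prop :=
  exists t, orth G t /\ forall v, inLat MK v <-> inLat ML (v *m t).

(* the representation [A,b,a] -> K sending v1 |-> x1, v2 |-> x2
   (a B-preserving linear map is determined by the images of v1, v2) *)
Definition reps_binary (n : nat) (G M : 'M[rat]_n) (A b a : int)
    (x1 x2 : 'rV[rat]_n) : Prop :=
  [/\ inLat M x1, inLat M x2, bil G x1 x1 = A%:~R, bil G x1 x2 = b%:~R
    & bil G x2 x2 = a%:~R].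

(* Main.v *)
Require Import Defs.
From mathcomp Require Import all_boot all_order all_algebra.
From Stdlib Require Import Classical.
From mathcomp Require Import ring.
Import Order.TTheory GRing.Theory Num.Theory.
Local Open Scope ring_scope.
Set Implicit Arguments.

Lemma bil_orth n (G t : 'M[rat]_n) u v :
  orth G t -> bil G (u *m t) (v *m t) = bil G u v.
Proof.
case=> _ H; rewrite /bil trmx_mul -{2}H.
by rewrite !mulmxA.
Qed.

Lemma bil_sym n (G : 'M[rat]_n) u v : G^T = G -> bil G u v = bil G v u.
Proof.
move=> GT.
have E : (u *m G *m v^T)^T = v *m G *m u^T by rewrite !trmx_mul trmxK GT mulmxA.
by rewrite /bil -E [RHS]mxE.
Qed.

Lemma inLat0 n (M : 'M[rat]_n) : inLat M 0.
Proof.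
exists 0.
have -> : map_mx (fun z : int => z%:~R) (0 : 'rV[int]_n) = (0 : 'rV[rat]_n).
  by apply/matrixP => i j; rewrite !mxE.
by rewrite mul0mx.
Qed.

Lemma congr_mod (s alpha a : int) :
  (a = alpha %[mod s])%Z -> congr s alpha (a%:~R).
Proof.
move=> h; exists ((a %/ s)%Z - (alpha %/ s)%Z).
congr (_%:~R).
have e1 := intdiv.divz_eq a s; have e2 := intdiv.divz_eq alpha s.
rewrite h in e1.
move: e1 e2; set q1 := (a %/ s)%Z; set q2 := (alpha %/ s)%Z; set r := (alpha %% s)%Z.
move=> e1 e2; rewrite {1}e1 {1}e2; ring.
Qed.

Theorem corollary2p4 (n : nat) (G ML : 'M[rat]_n) (A s : int) (w : 'rV[rat]_n)
    (alpha beta a b : int) :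
  G^T = G -> posdef G -> is_lattice G ML ->
  0 < A -> 0 < s -> Rset G ML A w ->
  (* (alpha, beta) in S_s *)
  prec_w G ML A alpha beta s w ->
  (forall MK : 'M[rat]_n, in_gen G ML MK -> ~ iso G MK ML ->
     prec_lat G MK ML A alpha beta s) ->
  (a = alpha %[mod s])%Z -> (b = beta %[mod s])%Z -> 0 < A * a - b ^+ 2 ->
  (exists (MK : 'M[rat]_n) (x1 x2 : 'rV[rat]_n),
      in_gen G ML MK /\ reps_binary G MK A b a x1 x2) ->
  exists y2 : 'rV[rat]_n, reps_binary G ML A b a w y2.
Proof.
move=> GT pd Lat Apos spos Rw Pw Plat ha hb hab
  [MK [x1 [x2 [Hgen [X1 X2 Q1 B12 Q2]]]]].
have cA := @congr_mod _ _ _ ha; have cB := @congr_mod _ _ _ hb.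
have step : forall v u, Rset G ML A v -> inLat ML u -> bil G u u = a%:~R ->
    bil G v u = b%:~R -> exists y2, reps_binary G ML A b a w y2.
  move=> v u Rv Lu Qu Bvu.
  have cB' : congr s beta (bil G u v) by rewrite bil_sym // Bvu.
  have [t [Ht _ _ Hvw Hk]] := Pw v Rv u Lu (eq_ind_r _ cA Qu) cB'.
  exists (u *m t); split.
  - by case: Rw.
  - by have := Hk 0 (inLat0 _); rewrite scaler0 addr0.
  - by case: Rw.
  - by rewrite -Hvw bil_orth.
  - by rewrite bil_orth.
case: (classic (iso G MK ML)) => [[t [Ht Hiff]] | Hn].
  apply: (step (x1 *m t) (x2 *m t)).
  - by split; [apply/Hiff | rewrite bil_orth].
  - by apply/Hiff.
  - by rewrite bil_orth.
  - by rewrite bil_orth.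
have cB' : congr s beta (bil G x2 x1) by rewrite bil_sym // B12.
have [t [Ht _ Hv Hk]] :=
  Plat MK Hgen Hn x1 (conj X1 Q1) x2 X2 (eq_ind_r _ cA Q2) cB'.
apply: (step (x1 *m t) (x2 *m t)).
- by split; [ | rewrite bil_orth].
- by have := Hk 0 (inLat0 _); rewrite scaler0 addr0.
- by rewrite bil_orth.
- by rewrite bil_orth.
Qed.
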